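(* Let $G$ be a group with a conjugation-closed generating set $X$ and let $g\in\mathrm{Mon}(X)$. The poset $\mathrm{Fact}(G,g,\mathbf I)$ is simplicial, i.e. each of its intervals $[\mathbf x,\mathbf y]$ (with $\mathbf x\le\mathbf y$) is isomorphic to a Boolean lattice.
   Context: $\mathrm{Mon}(X)$ is the generated submonoid; $\ell(x)$ is the minimal length of a product of elements of $X$ equal to $x$. A linear factorization of $g$ is a row vector $[x_L\ x_1\ \cdots\ x_k\ x_R]$ ($k\ge0$) of elements of $\mathrm{Mon}(X)$ with $x_1,\dots,x_k\ne1$ ($x_L,x_R$ may be trivial), $\ell(x_L)+\sum_i\ell(x_i)+\ell(x_R)=\ell(g)$ and $x_Lx_1\cdots x_kx_R=g$. With $x_0=x_L$, $x_{k+1}=x_R$, the merge at position $i\in\{0,\dots,k\}$ replaces consecutive entries $x_i,x_{i+1}$ by the single entry $x_ix_{i+1}$. $\mathrm{Fact}(G,g,\mathbf I)$ is the set of linear factorizations of $g$ ordered by $\mathbf x\le\mathbf y$ iff $\mathbf x$ is obtained from $\mathbf y$ by a finite sequence of merges. A Boolean lattice is the poset of all subsets of a finite set under inclusion. *)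

(* Defs.v *)
From Stdlib Require Import ClassicalEpsilon Relation_Operators.
From mathcomp Require Import all_boot.

Set Implicit Arguments.
Unset Strict Implicit.
Unset Printing Implicit Defensive.

Record group := Group {
  carrier :> Type;
  gmul : carrier -> carrier -> carrier;
  gone : carrier;
  ginv : carrier -> carrier;
  gmulA : forall a b c, gmul a (gmul b c) = gmul (gmul a b) c;
  gmul1 : forall a, gmul gone a = a;
  gmulr1 : forall a, gmul a gone = a;
  gmulV : forall a, gmul (ginv a) a = gone;
  gmulVr : forall a, gmul a (ginv a) = gone }.

Section Fact.
Variable G : group.
Local Notation "a * b" := (gmul a b).
Local Notation "1" := (gone G).

Definition gprod (s : seq G) : G := foldr (@gmul G) 1 s.

Definition conj_closed (X : G -> Prop) : Prop :=
  forall x h, X x -> X (ginv h * x * h).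

Definition generates (X : G -> Prop) : Prop :=
  forall g, exists s : seq G,
    (forall i, i < size s -> X (nth 1 s i) \/ X (ginv (nth 1 s i))) /\ gprod s = g.

Definition word_of (X : G -> Prop) (s : seq G) (x : G) : Prop :=
  (forall i, i < size s -> X (nth 1 s i)) /\ gprod s = x.

Definition Mon (X : G -> Prop) (x : G) : Prop := exists s, word_of X s x.

Definition is_min_len (X : G -> Prop) (x : G) (n : nat) : Prop :=
  (exists s, word_of X s x /\ size s = n) /\
  (forall s, word_of X s x -> n <= size s).

(* l(x): the minimal length (well-defined for x in Mon(X)) *)
Definition ell (X : G -> Prop) (x : G) : nat :=
  epsilon (inhabits 0%N) (is_min_len X x).

(* A linear factorization [x_L x_1 ... x_k x_R] of g is represented by the
   list [:: x_L, x_1, ..., x_k & [:: x_R]] (size k+2). *)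
Definition is_lin_fact (X : G -> Prop) (g : G) (s : seq G) : Prop :=
  [/\ 2 <= size s,
      (forall i, i < size s -> Mon X (nth 1 s i)),
      (forall i, 0 < i < (size s).-1 -> nth 1 s i <> 1),
      \sum_(a <- s) ell X a = ell X g
    & gprod s = g].

(* merge at position i (0 <= i <= k, i.e. i < size s - 1): replaces the
   consecutive entries x_i, x_{i+1} by x_i x_{i+1}. *)
Definition merge (i : nat) (s : seq G) : seq G :=
  take i s ++ (nth 1 s i * nth 1 s i.+1) :: drop i.+2 s.

Definition merge_step (t s : seq G) : Prop :=
  exists2 i, i < (size s).-1 & t = merge i s.

Definition Fact (X : G -> Prop) (g : G) : Type := {s : seq G | is_lin_fact X g s}.

Definition fact_le (X : G -> Prop) (g : G) (x y : Fact X g) : Prop :=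
  clos_refl_trans (seq G) merge_step (proj1_sig x) (proj1_sig y).

Definition interval (X : G -> Prop) (g : G) (x y : Fact X g) : Type :=
  {z : Fact X g | fact_le x z /\ fact_le z y}.

End Fact.

(* A poset P with order le is isomorphic to a Boolean lattice: there is a
   finite set (wlog {0,...,n-1}) and an order isomorphism from P onto the
   set of all its subsets ordered by inclusion. *)
Definition iso_Boolean_lattice (P : Type) (le : P -> P -> Prop) : Prop :=
  exists (n : nat) (f : P -> {set 'I_n}) (f' : {set 'I_n} -> P),
    [/\ cancel f f', cancel f' f &
        forall a b, le a b <-> f a \subset f b].

(* Main.v *)
From Stdlib Require Import ClassicalEpsilon Relation_Operators Operators_Properties Classical ProofIrrelevance.
Require Import Defs.
From mathcomp Require Import all_boot zify.
Set Implicit Arguments.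
Unset Strict Implicit.
Unset Printing Implicit Defensive.

Fixpoint czg (T : Type) (op : T -> T -> T) (a : T) (c : bitseq) (s : seq T) : seq T :=
  match s with
  | [::] => [:: a]
  | x :: s' => if head false c then a :: czg op x (behead c) s'
               else czg op (op a x) (behead c) s'
  end.

Fixpoint flip (i : nat) (c : bitseq) : bitseq :=
  match c with
  | [::] => [::]
  | b :: c' => if b then (if i is i'.+1 then true :: flip i' c' else false :: c')
               else false :: flip i c'
  end.

Definition ble (c c' : bitseq) := all2 implb c c'.

Lemma ble_refl c : ble c c.
Proof. by elim: c => //= b c ->; rewrite implybb. Qed.

Lemma ble_trans c1 c2 c3 : ble c1 c2 -> ble c2 c3 -> ble c1 c3.
Proof.
elim: c1 c2 c3 => [|b1 c1 IH] [|b2 c2] [|b3 c3] //= /andP [H1 H2] /andP [H3 H4].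
rewrite (IH _ _ H2 H4) andbT; by case: b1 b2 b3 H1 H3 => [] [] [].
Qed.

Lemma ble_size c c' : ble c c' -> size c = size c'.
Proof. by elim: c c' => [|b c IH] [|b' c'] //= /andP [_ /IH ->]. Qed.

Lemma size_flip i c : size (flip i c) = size c.
Proof. elim: c i => [|[] c IH] [|i] //=; by rewrite IH. Qed.

Lemma ble_flip i c : ble (flip i c) c.
Proof. elim: c i => [|[] c IH] [|i] //=; by rewrite ?IH ?ble_refl. Qed.

Lemma size_czg T op (a : T) c s : size c = size s -> size (czg op a c s) = (count id c).+1.
Proof.
elim: s a c => [|x s IH] a [|b c] //= [Hs]; case: b => /=; rewrite IH //.
Qed.

Lemma czg_head T (op : T -> T -> T) (opA : associative op) u a c s :
  czg op (op u a) c s = match czg op a c s with [::] => [::] | h :: r => op u h :: r end.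
Proof.
elim: s a c => [|x s IH] a c //=; case: (head false c) => //.
by rewrite -opA IH.
Qed.

Lemma sumn_czn n c es : sumn (czg addn n c es) = n + sumn es.
Proof.
elim: es n c => [|x es IH] n c /=; first by rewrite !addn0.
case: (head false c) => /=; by rewrite IH ?addnA.
Qed.

Lemma czn_head n c es : n <= head 0 (czg addn n c es).
Proof.
elim: es n c => [|x es IH] n c //=; case: (head false c) => //=.
apply: leq_trans (IH _ _); exact: leq_addr.
Qed.

Lemma all2_leq_sum u v : all2 leq u v -> sumn u <= sumn v.
Proof.
elim: u v => [|a u IH] [|b v] //= /andP [Hab Huv]; apply: leq_add => //; exact: IH.
Qed.

Lemma all2_leq_eq u v : all2 leq u v -> sumn v <= sumn u -> u = v.
Proof.
elim: u v => [|a u IH] [|b v] //= /andP [Hab Huv] Hs.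
have Hs2 := all2_leq_sum Huv.
have Hab' : a = b by apply/eqP; rewrite eqn_leq Hab /=; lia.
subst b; rewrite (IH v) //; lia.
Qed.

Definition pbl (es : seq nat) := forall j, j.+1 < size es -> 0 < nth 0 es j.

Lemma pbl_tail x es : pbl (x :: es) -> pbl es.
Proof. by move=> H j Hj; apply: (H j.+1). Qed.

Lemma czn_inj es e c c' : size c = size es -> size c' = size es -> pbl es ->
  czg addn e c es = czg addn e c' es -> c = c'.
Proof.
elim: es e c c' => [|x es IH] e [|b c] [|b' c'] //=.
move=> [Hc] [Hc'] Hp.
have Hp' := pbl_tail Hp.
have key : forall cr cr', size cr = size es -> size cr' = size es ->
    e :: czg addn x cr es <> czg addn (e + x) cr' es.
  move=> cr cr' Hr Hr' E.
  case: es {IH Hc Hc' Hp'} Hp Hr Hr' E => [|y es] Hp Hr Hr'.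
    by case: cr cr' Hr Hr' => [|? ?] [|? ?].
  have Hx : 0 < x by apply: (Hp 0).
  move=> E; have := czn_head (e + x) cr' (y :: es); rewrite -E /=; lia.
case: b b' => [] [] E.
- by case: E => /IH ->.
- by case: (key _ _ Hc Hc' E).
- by case: (key _ _ Hc' Hc (esym E)).
- by rewrite (IH _ _ _ Hc Hc' Hp' E).
Qed.

Lemma czn_pos es e c i : size c = size es -> pbl es ->
  0 < i < (size (czg addn e c es)).-1 -> 0 < nth 0 (czg addn e c es) i.
Proof.
elim: es e c i => [|x es IH] e [|b c] i //=; first by case: i.
move=> [Hc] Hp; have Hp' := pbl_tail Hp.
case: b => /=; last by apply: IH.
case: i => [|[|i]] //=.
- rewrite size_czg // => Hi.
  case: es {IH Hp'} Hp Hc Hi => [|y es] Hp Hc Hi; first by case: c Hc Hi.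
  apply: leq_trans (czn_head _ _ _); exact: (Hp 0).
- move=> Hi; apply: (IH x c i.+1) => //.
  move: Hi; case: (size _) => //= n; lia.
Qed.

Lemma cz_full T op (a : T) s : czg op a (nseq (size s) true) s = a :: s.
Proof. by elim: s a => [|x s IH] a //=; rewrite IH. Qed.
Section Basics.
Variable G : group.
Variable X : G -> Prop.
Local Notation "a * b" := (gmul a b).
Local Notation "1" := (gone G).

Lemma gprod_cat (s t : seq G) : gprod (s ++ t) = gprod s * gprod t.
Proof. elim: s => [|u s IH] /=; first by rewrite gmul1. by rewrite IH gmulA. Qed.

Lemma least_ex (P : nat -> Prop) : (exists n, P n) -> exists n, P n /\ forall m, P m -> n <= m.
Proof.
case=> n; elim: n {-2}n (leqnn n) => [|N IH] n Hn Pn.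
  exists n; split=> // m _; move: Hn; rewrite leqn0 => /eqP ->; done.
destruct (classic (exists m, m < n /\ P m)) as [[m [Hm Pm]]|H].
  by apply: (IH m) => //; rewrite -ltnS; apply: leq_trans Hm Hn.
exists n; split=> // m Pm; case: (leqP n m) => // Hm; exfalso; apply: H; by exists m.
Qed.

Lemma ell_spec x : Mon X x -> is_min_len X x (ell X x).
Proof.
move=> [s Hs]; rewrite /ell; apply: epsilon_spec.
have [n [[t [Ht Hn]] Hmin]] : exists n, (exists t, word_of X t x /\ size t = n) /\
   forall m, (exists t, word_of X t x /\ size t = m) -> n <= m.
  by apply: least_ex; exists (size s); exists s.
exists n; split; first by exists t.
by move=> u Hu; apply: Hmin; exists u.
Qed.

Lemma ell_le s x : word_of X s x -> ell X x <= size s.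
Proof. move=> H; have [_ H2] := ell_spec (ex_intro _ s H); exact: H2. Qed.

Lemma ell_word x : Mon X x -> exists s, word_of X s x /\ size s = ell X x.
Proof. by move/ell_spec=> []. Qed.

Lemma word_cat s t a b : word_of X s a -> word_of X t b -> word_of X (s ++ t) (a * b).
Proof.
move=> [Hs Ps] [Ht Pt]; split; last by rewrite gprod_cat Ps Pt.
move=> i; rewrite size_cat nth_cat; case: (ltnP i (size s)) => Hi Hl; first exact: Hs.
apply: Ht; rewrite -(ltn_add2l (size s)) subnKC //.
Qed.

Lemma Mon_mul a b : Mon X a -> Mon X b -> Mon X (a * b).
Proof. move=> [s Hs] [t Ht]; exists (s ++ t); exact: word_cat. Qed.

Lemma Mon1 : Mon X 1.
Proof. by exists [::]; split. Qed.

Lemma ell_mul a b : Mon X a -> Mon X b -> ell X (a * b) <= ell X a + ell X b.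
Proof.
move=> /ell_word [s [Hs <-]] /ell_word [t [Ht <-]].
rewrite -size_cat; apply: ell_le; exact: word_cat.
Qed.

Lemma ell1 : ell X 1 = 0.
Proof. apply/eqP; rewrite -leqn0; apply: (@ell_le [::]); by split. Qed.

Lemma ell_pos x : Mon X x -> x <> 1 -> 0 < ell X x.
Proof.
move=> /ell_word [s [[_ Hs] Hn]] Hx; rewrite -Hn; case: s Hs {Hn} => [|u s] //= Hs; by rewrite -Hs in Hx.
Qed.

Fixpoint allM (t : seq G) : Prop :=
  match t with [::] => True | u :: t => Mon X u /\ allM t end.

Lemma allM_nth t : allM t <-> forall i, i < size t -> Mon X (nth 1 t i).
Proof.
elim: t => [|u t IH] /=; first by split=> // _ [].
split.
  by move=> [Hu /IH Ht] [|i] //= Hi; apply: Ht.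
move=> H; split; first exact: (H 0).
by apply/IH => i Hi; apply: (H i.+1).
Qed.

Lemma allM_gprod t : allM t -> Mon X (gprod t).
Proof. elim: t => [|u t IH] /=; first by move=> _; exact: Mon1. by move=> [Hu Ht]; apply: Mon_mul => //; apply: IH. Qed.

Lemma ell_gprod t : allM t -> ell X (gprod t) <= sumn (map (ell X) t).
Proof.
elim: t => [|u t IH] /=; first by rewrite ell1.
move=> [Hu Ht]; apply: leq_trans (ell_mul Hu (allM_gprod Ht)) _.
by rewrite leq_add2l; apply: IH.
Qed.

End Basics.

Section Cz.
Variable G : group.
Variable X : G -> Prop.
Local Notation "a * b" := (gmul a b).
Local Notation "1" := (gone G).
Local Notation cz := (czg (@gmul G)).
Local Notation ell := (ell X).
Local Notation allM := (allM X).

Lemma gprod_cz a c s : gprod (cz a c s) = a * gprod s.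
Proof.
elim: s a c => [|x s IH] a c /=; first by rewrite gmulr1.
case: (head false c) => /=; by rewrite IH ?gmulA.
Qed.

Lemma merge_cz a c s i : size c = size s -> i < count id c ->
  Defs.merge i (cz a c s) = cz a (flip i c) s.
Proof.
elim: s a c i => [|x s IH] a [|b c] i //=.
move=> [Hc]; case: b => /=; last by move=> Hi; rewrite IH.
case: i => [|i] Hi /=.
  rewrite (czg_head (@gmulA G)).
  case E: (cz x c s) => [|h r]; first by move: (size_czg (@gmul G) x Hc); rewrite E.
  by rewrite /Defs.merge /= drop0.
by rewrite -IH.
Qed.

Lemma allM_cz a c s : Mon X a -> allM s -> allM (cz a c s).
Proof.
elim: s a c => [|x s IH] a c /=; first by [].
move=> Ha [Hx Hs]; case: (head false c) => /=; first by split => //; apply: IH.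
apply: IH => //; exact: Mon_mul.
Qed.

Lemma le_ell_cz a n c s : Mon X a -> ell a <= n -> allM s ->
  all2 leq (map ell (cz a c s)) (czg addn n c (map ell s)).
Proof.
elim: s a n c => [|x s IH] a n c /=; first by move=> _ ->.
move=> Ha Hn [Hx Hs]; case: (head false c) => /=.
  by rewrite Hn /=; apply: IH.
apply: IH => //; first exact: Mon_mul.
apply: leq_trans (ell_mul Ha Hx) _; by rewrite leq_add2r.
Qed.

Lemma map_ell_cz a c s : Mon X a -> allM s ->
  ell (a * gprod s) = ell a + sumn (map ell s) ->
  map ell (cz a c s) = czg addn (ell a) c (map ell s).
Proof.
move=> Ha Hs He; apply: all2_leq_eq; first exact: le_ell_cz.
rewrite sumn_czn -He -(gprod_cz a c s); apply: ell_gprod; exact: allM_cz.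
Qed.

Local Notation crt := (clos_refl_trans (seq G) (@merge_step G)).

Lemma lift_crt a w w' : crt w w' -> crt (a :: w) (a :: w').
Proof.
elim=> [u v [i Hi ->]| u | u v z _ H1 _ H2].
- apply: rt_step; exists i.+1; first by rewrite /=; move: Hi; case: (size v) => //= n; lia.
  by rewrite /Defs.merge.
- exact: rt_refl.
- exact: rt_trans H1 H2.
Qed.

Lemma reach_down a s c c' : size c = size s -> ble c' c -> crt (cz a c' s) (cz a c s).
Proof.
elim: s a c c' => [|x s IH] a c c' Hc Hle.
  have := ble_size Hle; rewrite Hc; case: c Hc {Hle}; case: c' => //= *; exact: rt_refl.
case: c Hc Hle => [|b cr] //= [Hc]; case: c' => [|b' cr'] //= /andP [Hb Hle].
have Hc' : size cr' = size s by rewrite (ble_size Hle).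
case: b b' Hb => [] [] //= _.
- exact/lift_crt/IH.
- apply: rt_trans (lift_crt a (IH x _ _ Hc Hle)).
  apply: rt_step; exists 0.
    by rewrite /= (size_czg _ _ Hc').
  have := @merge_cz a (true :: cr') (x :: s) 0; rewrite /= => <- //; by rewrite Hc'.
- exact: IH.
Qed.

Lemma reach_up a s t u : crt t u -> forall c, size c = size s -> u = cz a c s ->
  exists c', [/\ size c' = size s, ble c' c & t = cz a c' s].
Proof.
move=> H; move: (@clos_rt_rt1n _ _ _ _ H) => {}H; elim: H => [t0 | t0 w v [i Hi ->] _ IH] c Hc Heq.
  by exists c; split; rewrite ?ble_refl.
have [c'' [Hs Hle Ew]] := IH c Hc Heq; rewrite Ew in Hi *.
exists (flip i c''); split.
- by rewrite size_flip.
- exact: ble_trans (ble_flip _ _) Hle.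
- apply: merge_cz => //; move: Hi; rewrite (size_czg _ _ Hs) //.
Qed.
End Cz.

Fixpoint emb (cx d : bitseq) : bitseq :=
  match cx with
  | [::] => [::]
  | bx :: cx' => if bx then true :: emb cx' d else head false d :: emb cx' (behead d)
  end.

Definition prj (cx c : bitseq) := mask (map negb cx) c.

Lemma size_emb cx d : size (emb cx d) = size cx.
Proof. elim: cx d => [|[] cx IH] d //=; by rewrite IH. Qed.

Lemma ble_emb cx d : ble cx (emb cx d).
Proof. elim: cx d => [|[] cx IH] d //=; by rewrite IH. Qed.

Lemma emb_prj cx c : ble cx c -> emb cx (prj cx c) = c.
Proof.
rewrite /prj; elim: cx c => [|bx cx IH] [|b c] //= /andP [Hb Hc].
by case: bx Hb => /= [-> | _]; rewrite IH.
Qed.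

Lemma prj_emb cx d : size d = count negb cx -> prj cx (emb cx d) = d.
Proof.
rewrite /prj; elim: cx d => [|bx cx IH] d /=; first by case: d.
case: bx => /=; first exact: IH.
by case: d => [|b d] //= [Hd]; rewrite IH.
Qed.

Lemma size_prj cx c : size c = size cx -> size (prj cx c) = count negb cx.
Proof. by move=> H; rewrite /prj size_mask ?size_map // count_map. Qed.

Lemma ble_prj cx c c' : ble cx c -> ble cx c' -> ble c c' = ble (prj cx c) (prj cx c').
Proof.
rewrite /prj; elim: cx c c' => [|bx cx IH] [|b c] [|b' c'] //= /andP [Hb Hc] /andP [Hb' Hc'].
by case: bx Hb Hb' => /= [-> ->|_ _] /=; rewrite IH.
Qed.

Lemma ble_full c : ble c (nseq (size c) true).
Proof. by elim: c => //= b c ->; rewrite implybT. Qed.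

Lemma count_emb cx d : count id cx <= count id (emb cx d).
Proof.
elim: cx d => [|[] cx IH] d //=; first by rewrite ltnS.
apply: leq_trans (IH (behead d)) _; exact: leq_addl.
Qed.

Lemma bleP d d' : size d = size d' ->
  ble d d' <-> (forall i, nth false d i -> nth false d' i).
Proof.
elim: d d' => [|b d IH] [|b' d'] //=.
move=> [Hs]; rewrite /ble /= -/(ble d d'); split.
  move=> /andP [Hb /(IH _ Hs) H] [|i] /=; last exact: H. by move/implyP: Hb.
move=> H; apply/andP; split; first by apply/implyP; exact: (H 0).
by apply/(IH _ Hs) => i; apply: (H i.+1).
Qed.

Definition bits n (S : {set 'I_n}) : bitseq := [seq k \in S | k <- enum 'I_n].
Definition setof n (d : bitseq) : {set 'I_n} := [set k : 'I_n | nth false d k].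

Lemma size_bits n (S : {set 'I_n}) : size (bits S) = n.
Proof. by rewrite size_map size_enum_ord. Qed.

Lemma setof_bits n (S : {set 'I_n}) : setof n (bits S) = S.
Proof.
apply/setP => k; rewrite inE /bits (nth_map k) ?size_enum_ord //.
by rewrite nth_ord_enum.
Qed.

Lemma bits_setof n d : size d = n -> bits (setof n d) = d.
Proof.
move=> Hd; apply: (@eq_from_nth _ false); first by rewrite size_bits.
move=> i; rewrite size_bits => Hi.
rewrite /bits (nth_map (Ordinal Hi)) ?size_enum_ord //.
have -> : nth (Ordinal Hi) (enum 'I_n) i = Ordinal Hi.
  by have := nth_ord_enum (Ordinal Hi) (Ordinal Hi).
by rewrite inE.
Qed.

Lemma setof_sub n d d' : size d = n -> size d' = n ->
  (setof n d \subset setof n d') <-> ble d d'.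
Proof.
move=> Hd Hd'; rewrite bleP ?Hd ?Hd' //; split.
  move/subsetP=> H i; case: (ltnP i n) => Hi; last by rewrite nth_default ?Hd.
  by have := H (Ordinal Hi); rewrite !inE; apply.
by move=> H; apply/subsetP => k; rewrite !inE; apply: H.
Qed.

Lemma big_sumn (T : Type) (F : T -> nat) (t : seq T) : \sum_(b <- t) F b = sumn (map F t).
Proof. elim: t => [|u t IH] /=; by rewrite ?big_nil ?big_cons ?IH. Qed.

Lemma sig_eq (A : Type) (P : A -> Prop) (u v : sig P) : proj1_sig u = proj1_sig v -> u = v.
Proof.
case: u v => [u pu] [v pv] /= E; subst v; by rewrite (proof_irrelevance _ pu pv).
Qed.

Section Main.
Variable G : group.
Variable X : G -> Prop.
Variable g : G.
Variable a : G.
Variable s : seq G.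
Local Notation "a * b" := (gmul a b).
Local Notation "1" := (gone G).
Local Notation cz := (czg (@gmul G)).
Local Notation ell := (ell X).
Local Notation crt := (clos_refl_trans (seq G) (@merge_step G)).
Hypothesis Ha : Mon X a.
Hypothesis Hs : allM X s.
Hypothesis Hg : a * gprod s = g.
Hypothesis He : ell g = ell a + sumn (map ell s).
Hypothesis Hint : pbl (map ell s).

Lemma map_ell_cz' c : map ell (cz a c s) = czg addn (ell a) c (map ell s).
Proof. apply: map_ell_cz => //; by rewrite Hg. Qed.

Lemma lf_cz c : size c = size s -> 0 < count id c -> is_lin_fact X g (cz a c s).
Proof.
move=> Hc Hpos; split.
- by rewrite (size_czg _ _ Hc).
- apply/allM_nth; exact: allM_cz.
- move=> i Hi E.
  have Hc' : size c = size (map ell s) by rewrite size_map.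
  have := @czn_pos _ (ell a) c i Hc' Hint.
  rewrite -map_ell_cz' size_map (nth_map 1); last by case/andP: Hi => _ /leq_trans; apply; exact: leq_pred.
  rewrite E ell1 ltnn => H; by have := H Hi.
- by rewrite big_sumn map_ell_cz' sumn_czn He.
- by rewrite gprod_cz Hg.
Qed.

Lemma cz_inj c c' : size c = size s -> size c' = size s -> cz a c s = cz a c' s -> c = c'.
Proof.
move=> Hc Hc' E; apply: (@czn_inj (map ell s) (ell a)); rewrite ?size_map //.
by rewrite -!map_ell_cz' E.
Qed.

Lemma le_iff c c' : size c = size s -> size c' = size s ->
  crt (cz a c s) (cz a c' s) <-> ble c c'.
Proof.
move=> Hc Hc'; split; last exact: reach_down.
move=> H; have [c'' [H1 H2 H3]] := reach_up H Hc' (erefl _).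
by rewrite (cz_inj Hc H1 H3).
Qed.

Definition cut (t : seq G) : bitseq :=
  epsilon (inhabits [::]) (fun c => size c = size s /\ t = cz a c s).

Lemma cut_spec t : crt t (a :: s) -> size (cut t) = size s /\ t = cz a (cut t) s.
Proof.
move=> H; rewrite /cut; apply epsilon_spec.
have Hn : size (nseq (size s) true) = size s by rewrite size_nseq.
have [c' [H1 _ H3]] := reach_up H Hn (esym (cz_full _ _ _)).
by exists c'.
Qed.

Variables (x y : Fact X g).
Hypothesis Hy : proj1_sig y = a :: s.
Hypothesis hxy : fact_le x y.

Local Notation I := (interval x y).

Definition tt_ (w : I) : seq G := proj1_sig (proj1_sig w).

Lemma tt_le (w : I) : crt (tt_ w) (a :: s).
Proof. rewrite -Hy; exact: (proj2 (proj2_sig w)). Qed.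

Definition cx := cut (proj1_sig x).

Lemma cx_spec : size cx = size s /\ proj1_sig x = cz a cx s.
Proof. apply: cut_spec; rewrite -Hy; exact: hxy. Qed.

Definition ct (w : I) := cut (tt_ w).

Lemma ct_spec w : size (ct w) = size s /\ tt_ w = cz a (ct w) s.
Proof. apply: cut_spec; exact: tt_le. Qed.

Lemma ble_cx w : ble cx (ct w).
Proof.
have [H1 H2] := cx_spec; have [H3 H4] := ct_spec w.
apply/(le_iff H1 H3); rewrite -H2 -H4; exact: (proj1 (proj2_sig w)).
Qed.

Lemma cx_pos : 0 < count id cx.
Proof.
have [H1 H2] := cx_spec; have [H _ _ _ _] := proj2_sig x.
by move: H; rewrite H2 (size_czg _ _ H1).
Qed.

Definition n := count negb cx.

Definition ff (w : I) : {set 'I_n} := setof n (prj cx (ct w)).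

Definition ee (S : {set 'I_n}) := emb cx (bits S).

Lemma size_ee S : size (ee S) = size s.
Proof. by rewrite /ee size_emb (proj1 cx_spec). Qed.

Lemma lf_ee S : is_lin_fact X g (cz a (ee S) s).
Proof.
apply: lf_cz; first exact: size_ee.
apply: leq_trans cx_pos _; exact: count_emb.
Qed.

Definition fx S : Fact X g := exist _ _ (lf_ee S).

Lemma fx_le1 S : fact_le x (fx S).
Proof.
rewrite /fact_le /= (proj2 cx_spec); apply: reach_down; first exact: size_ee.
exact: ble_emb.
Qed.

Lemma fx_le2 S : fact_le (fx S) y.
Proof.
rewrite /fact_le /= Hy -(cz_full (@gmul G) a s); apply: reach_down.
  by rewrite size_nseq.
rewrite -(size_ee S); exact: ble_full.
Qed.

Definition ff' (S : {set 'I_n}) : I := exist _ (fx S) (conj (fx_le1 S) (fx_le2 S)).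

Lemma ct_ff' S : ct (ff' S) = ee S.
Proof.
have [H1 H2] := ct_spec (ff' S).
apply: cz_inj => //; try exact: size_ee. all: by rewrite -H2.
Qed.

Lemma size_ct_n w : size (prj cx (ct w)) = n.
Proof. by rewrite size_prj // (proj1 (ct_spec w)) (proj1 cx_spec). Qed.

Theorem main_iso : iso_Boolean_lattice (fun u v : I => fact_le (proj1_sig u) (proj1_sig v)).
Proof.
exists n, ff, ff'; split.
- move=> w; apply: sig_eq; apply: sig_eq; rewrite /= -/(tt_ w) (proj2 (ct_spec w)) /ee /ff.
  by rewrite bits_setof ?size_ct_n // emb_prj // ble_cx.
- move=> S; rewrite /ff ct_ff' /ee prj_emb ?setof_bits //; by rewrite size_bits.
- move=> u v; rewrite /ff setof_sub ?size_ct_n //.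
  rewrite -ble_prj ?ble_cx //.
  have [H1 H2] := ct_spec u; have [H3 H4] := ct_spec v.
  rewrite -(le_iff H1 H3) -H2 -H4; done.
Qed.

End Main.

Theorem proposition3p12 (G : group) (X : G -> Prop) (g : G)
  (hgen : generates X) (hconj : conj_closed X) (hg : Mon X g)
  (x y : Fact X g) (hxy : fact_le x y) :
  iso_Boolean_lattice
    (fun a b : interval x y => fact_le (proj1_sig a) (proj1_sig b)).
Proof.
have [H2 HM Hne Hsum Hprod] := proj2_sig y.
case Ey: (proj1_sig y) H2 HM Hne Hsum Hprod => [|a s] // H2 HM Hne Hsum Hprod.
have HM' : allM X (a :: s) by apply/allM_nth.
case: HM' => Ha Hs.
apply: (@main_iso G X g a s) => //.
- by rewrite -Hsum big_sumn.
- move=> j Hj; rewrite size_map in Hj; rewrite (nth_map (gone G)); last exact: ltnW.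
  apply: ell_pos; first by move/allM_nth: Hs; apply; exact: ltnW.
  by apply: (Hne j.+1) => /=.
Qed.
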